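(* Let $n\ge 3$, let $J_n\in M_n(\mathbb{C})$ be the nilpotent Jordan block $J_n=\sum_{i=1}^{n-1}E_{i,i+1}$, and let $B_n=E_{n-1,1}-E_{n,2}\in M_n(\mathbb{C})$. Then $\mathcal L(\{J_n,B_n\})=M_n(\mathbb{C})$, $l(\{J_n,B_n\})=2n-3$, and $l_0(\{J_n,B_n\})=2n-2$.
   Context: $E_{i,j}$ denotes the matrix unit with $1$ in position $(i,j)$ and $0$ elsewhere. For a finite subset $\mathcal S$ of $M_n(\mathbb{F})$: a word of length $m$ is a product $S_1\cdots S_m$ with $S_j\in\mathcal S$, the word of length $0$ being $I_n$. $\mathcal L_k(\mathcal S)$ is the span of words of length at most $k$ including $I_n$; $\mathcal L(\mathcal S)=\bigcup_k\mathcal L_k(\mathcal S)$; $\mathcal L_k^0(\mathcal S)$ is the span of words of length between $1$ and $k$ (identity not automatically included). $l(\mathcal S)$ is the smallest $k$ with $\mathcal L_k(\mathcal S)=\mathcal L_{k+1}(\mathcal S)$, and $l_0(\mathcal S)$ is the smallest $k$ with $\mathcal L^0_k(\mathcal S)=\mathcal L^0_{k+1}(\mathcal S)$. *)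

(* Defs.v *)
From HB Require Import structures.
From mathcomp Require Import all_boot all_order all_algebra all_field.
Set Implicit Arguments. Unset Strict Implicit. Unset Printing Implicit Defensive.
Import GRing.Theory.
Local Open Scope ring_scope.

Section Words.
Variables (F : fieldType) (n : nat).

Fixpoint words (S : seq 'M[F]_n) (m : nat) : seq 'M[F]_n :=
  match m with
  | 0 => [:: 1%:M]
  | m'.+1 => [seq A *m W | A <- S, W <- words S m']
  end.

Definition Lk (S : seq 'M[F]_n) (k : nat) : {vspace 'M[F]_n} :=
  <<flatten [seq words S m | m <- iota 0 k.+1]>>%VS.

Definition L0k (S : seq 'M[F]_n) (k : nat) : {vspace 'M[F]_n} :=
  <<flatten [seq words S m | m <- iota 1 k]>>%VS.

Definition inL (S : seq 'M[F]_n) (A : 'M[F]_n) : Prop :=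
  exists k, A \in Lk S k.

Definition is_l (S : seq 'M[F]_n) (k : nat) : Prop :=
  Lk S k = Lk S k.+1 /\ forall j, (j < k)%N -> Lk S j <> Lk S j.+1.

Definition is_l0 (S : seq 'M[F]_n) (k : nat) : Prop :=
  L0k S k = L0k S k.+1 /\ forall j, (j < k)%N -> L0k S j <> L0k S j.+1.

End Words.

Definition Jn (F : fieldType) (n : nat) : 'M[F]_n :=
  \matrix_(i, j) (((j : nat) == (i : nat).+1)%:R).

(* B_n = E_{n-1,1} - E_{n,2}  (0-based: (n-2, 0) and (n-1, 1)) *)
Definition Bn (F : fieldType) (n : nat) : 'M[F]_n :=
  \matrix_(i, j) ((((i : nat) == (n - 2)%N) && ((j : nat) == 0%N))%:R
                  - (((i : nat) == (n - 1)%N) && ((j : nat) == 1%N))%:R).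

(* Main.v *)
Require Import Defs.
From HB Require Import structures.
From mathcomp Require Import all_boot all_order all_algebra all_field.
From mathcomp Require Import zify.
Set Implicit Arguments. Unset Strict Implicit. Unset Printing Implicit Defensive.
Import GRing.Theory.
Local Open Scope ring_scope.

Section Main.
Variable k : nat.
Local Notation n := k.+3.
Local Notation MM := 'M[algC]_n.
Definition J : MM := Jn algC n.
Definition B : MM := Bn algC n.
Definition ent (X : MM) (a b : nat) : algC :=
  if (a < n)%N && (b < n)%N then X (inord a) (inord b) else 0.
Definition E (a b : nat) : MM :=
  if (a < n)%N && (b < n)%N then delta_mx (inord a) (inord b) else 0.

Lemma ent_out X a b : ~~ ((a < n)%N && (b < n)%N) -> ent X a b = 0.
Proof. by rewrite /ent => /negbTE ->. Qed.

Lemma ent_eq X Y : (forall a b, (a < n)%N -> (b < n)%N -> ent X a b = ent Y a b) -> X = Y.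
Proof.
move=> h; apply/matrixP => i j.
have := h i j (ltn_ord i) (ltn_ord j).
by rewrite /ent !ltn_ord /= !inord_val.
Qed.

Lemma entJ X a b : ent (J *m X) a b = ent X a.+1 b.
Proof.
rewrite /ent; case: (ltnP b n) => hb; last by rewrite !andbF.
rewrite !andbT; case: (ltnP a n) => ha; last first.
  by rewrite ltnNge (leq_trans ha (leqnSn _)).
rewrite mxE; case: (ltnP a.+1 n) => ha1.
  rewrite (bigD1 (inord a.+1)) //= big1 ?addr0.
    by rewrite /J /Jn mxE !inordK // eqxx mul1r.
  move=> c hc; rewrite /J /Jn mxE inordK //.
  case: eqP => [e|]; last by rewrite mul0r.
  by move: hc; rewrite -e inord_val eqxx.
rewrite big1 // => c _; rewrite /J /Jn mxE inordK //.
case: eqP => [e|]; last by rewrite mul0r.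
have := ltn_ord c; lia.
Qed.

Lemma sum_pick (P : bool) (v : nat) (F : 'I_n -> algC) : (v < n)%N ->
  \sum_(c < n) (P && (c == v :> nat))%:R * F c = P%:R * F (inord v).
Proof.
move=> hv; rewrite (bigD1 (inord v)) //= inordK // eqxx andbT big1 ?addr0 //.
move=> c hc; case: eqP => [e|]; last by rewrite andbF mul0r.
by move: hc; rewrite -e inord_val eqxx.
Qed.

Lemma entB0 a b : ent B a b =
  ((a == k.+1) && (b == 0))%:R - ((a == k.+2) && (b == 1))%:R.
Proof.
rewrite /ent /B /Bn; case: (ltnP a n) => ha; case: (ltnP b n) => hb /=.
- rewrite mxE !inordK //.
- have -> : (b == 0)%N = false by apply/eqP; lia.
  have -> : (b == 1)%N = false by apply/eqP; lia.
  by rewrite !andbF subr0.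
- have -> : (a == k.+1)%N = false by apply/eqP; lia.
  have -> : (a == k.+2)%N = false by apply/eqP; lia.
  by rewrite subr0.
- have -> : (a == k.+1)%N = false by apply/eqP; lia.
  have -> : (a == k.+2)%N = false by apply/eqP; lia.
  by rewrite subr0.
Qed.

Lemma entB X a b : ent (B *m X) a b =
  (a == k.+1)%:R * ent X 0 b - (a == k.+2)%:R * ent X 1 b.
Proof.
rewrite /ent; case: (ltnP b n) => hb; last by rewrite !andbF !mulr0 subr0.
rewrite !andbT /=; case: (ltnP a n) => ha; last first.
  have -> : (a == k.+1)%N = false by apply/eqP; lia.
  have -> : (a == k.+2)%N = false by apply/eqP; lia.
  by rewrite !mul0r subr0.
rewrite mxE.
under eq_bigr => c _ do rewrite /B /Bn mxE inordK // mulrBl.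
rewrite sumrB !sum_pick //.
Qed.

Lemma ent1 a b : ent 1%:M a b = ((a == b) && (a < n)%N)%:R.
Proof.
rewrite /ent; case: (ltnP a n) => ha; case: (ltnP b n) => hb /=.
- by rewrite mxE andbT -(inj_eq val_inj) /= !inordK.
- case: eqP => // ?; lia.
- by rewrite andbF.
- by rewrite andbF.
Qed.

Lemma entJr X a b : (b < n)%N -> ent (X *m J) a b = if b is b'.+1 then ent X a b' else 0.
Proof.
move=> hb; rewrite /ent hb andbT; case: (ltnP a n) => ha /=; last by case: b hb.
rewrite mxE; case: b hb => [|b] hb.
  rewrite big1 // => c _; rewrite /J /Jn mxE !inordK //=; by rewrite mulr0.
rewrite (ltn_trans (ltnSn b) hb) (bigD1 (inord b)) //= big1 ?addr0.
  by rewrite /J /Jn mxE !inordK ?eqxx ?mulr1 // (ltn_trans (ltnSn b) hb).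
move=> c hc; rewrite /J /Jn mxE inordK //.
case: eqP => [e|]; last by rewrite mulr0.
by move: hc; rewrite (_ : c = inord b) ?eqxx //; apply/val_inj; rewrite /= inordK ?e //; lia.
Qed.

Lemma entE c d a b : ent (E c d) a b = [&& a == c, b == d, (c < n)%N & (d < n)%N]%:R.
Proof.
rewrite /ent /E; case: (ltnP a n)=>ha; case: (ltnP b n)=>hb; case: (ltnP c n)=>hc;
  case: (ltnP d n)=>hd /=; rewrite ?mxE ?andbF ?andbT //=;
  try by (case: eqP => ? //; case: eqP => ? //=; lia).
by rewrite -!(inj_eq val_inj) /= !inordK.
Qed.


Lemma entD X Y a b : ent (X + Y) a b = ent X a b + ent Y a b.
Proof. by rewrite /ent; case: ifP; rewrite ?mxE ?addr0. Qed.
Lemma entN X a b : ent (- X) a b = - ent X a b.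
Proof. by rewrite /ent; case: ifP; rewrite ?mxE ?oppr0. Qed.
Lemma entZ c X a b : ent (c *: X) a b = c * ent X a b.
Proof. by rewrite /ent; case: ifP; rewrite ?mxE ?mulr0. Qed.
Lemma ent0 a b : ent 0 a b = 0.
Proof. by rewrite /ent; case: ifP; rewrite ?mxE. Qed.

Definition S : seq MM := [:: J; B].

Lemma words0 : 1%:M \in words S 0. Proof. by rewrite mem_seq1. Qed.

Lemma wordsSE m : words S m.+1 = [seq A *m W | A <- S, W <- words S m].
Proof. by []. Qed.

Lemma wordsL A W m : A \in S -> W \in words S m -> A *m W \in words S m.+1.
Proof. move=> hA hW; exact: (allpairs_f (fun A W => A *m W) hA hW). Qed.

Lemma words_mul X Y a b : X \in words S a -> Y \in words S b -> X *m Y \in words S (a + b)%N.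
Proof.
elim: a X => [|a IH] X.
  by rewrite /= mem_seq1 => /eqP -> hY; rewrite mul1mx.
rewrite wordsSE => /allpairsP [[A W] [/= hA hW ->]] hY; rewrite -mulmxA.
exact: wordsL (IH _ hW hY).
Qed.

Lemma span_vanish (phi : MM -> algC) (X : seq MM) v :
  (forall x y, phi (x + y) = phi x + phi y) -> (forall c x, phi (c *: x) = c * phi x) ->
  phi 0 = 0 -> (forall x, x \in X -> phi x = 0) -> v \in <<X>>%VS -> phi v = 0.
Proof.
move=> hD hZ h0 hX /(@coord_span _ _ _ (in_tuple X)) ->.
apply: (big_ind (fun u => phi u = 0)) => //.
  by move=> x y hx hy; rewrite hD hx hy addr0.
move=> i _; rewrite hZ hX ?mulr0 //; exact: mem_nth.
Qed.

Lemma span_mul (A : MM) (X : seq MM) (U : {vspace MM}) v :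
  (forall x, x \in X -> A *m x \in U) -> v \in <<X>>%VS -> A *m v \in U.
Proof.
move=> hX /(@coord_span _ _ _ (in_tuple X)) ->.
rewrite mulmx_sumr; apply: memv_suml => i _.
rewrite -scalemxAr; apply: memvZ; apply: hX; exact: mem_nth.
Qed.

Lemma Lk_words W m j : W \in words S m -> (m <= j)%N -> W \in Lk S j.
Proof.
move=> hW hm; apply: memv_span; apply/flatten_mapP; exists m => //.
rewrite mem_iota; lia.
Qed.

Lemma Lk_inv x j : x \in flatten [seq words S m | m <- iota 0 j.+1] ->
  exists2 m, (m <= j)%N & x \in words S m.
Proof. move=> /flatten_mapP [m]; rewrite mem_iota => hm hx; exists m => //; lia. Qed.

Lemma L0k_words W m j : W \in words S m -> (1 <= m <= j)%N -> W \in L0k S j.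
Proof.
move=> hW hm; apply: memv_span; apply/flatten_mapP; exists m => //.
rewrite mem_iota; lia.
Qed.

Lemma L0k_inv x j : x \in flatten [seq words S m | m <- iota 1 j] ->
  exists2 m, (1 <= m <= j)%N & x \in words S m.
Proof. move=> /flatten_mapP [m]; rewrite mem_iota => hm hx; exists m => //; lia. Qed.


Lemma boolR (b1 b2 b3 b4 : bool) : b1 = b3 -> b2 = b4 ->
  (b1%:R - b2%:R : algC) = b3%:R - b4%:R.
Proof. by move=> -> ->. Qed.

Definition lp (p : nat) (X : MM) : MM := iter p (mulmx J) X.
Definition rp (q : nat) (X : MM) : MM := iter q (fun Y => Y *m J) X.

Lemma ent_lp p X a b : ent (lp p X) a b = ent X (a + p)%N b.
Proof.
elim: p a => [|p IH] a; first by rewrite addn0.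
by rewrite /lp iterS -/(lp p X) entJ IH addSnnS.
Qed.

Lemma ent_rp q X a b : (b < n)%N ->
  ent (rp q X) a b = if (q <= b)%N then ent X a (b - q)%N else 0.
Proof.
elim: q b => [|q IH] b hb; first by rewrite subn0.
rewrite /rp iterS -/(rp q X) entJr //; case: b hb => [|b] hb //.
by rewrite IH ?ltnS ?subSS //; lia.
Qed.

Lemma J_words : J \in words S 1.
Proof. by rewrite -[J]mulmx1; apply: wordsL; rewrite ?inE ?eqxx // words0. Qed.
Lemma B_words : B \in words S 1.
Proof. by rewrite -[B]mulmx1; apply: wordsL; rewrite ?inE ?eqxx ?orbT // words0. Qed.

Lemma lp_words p X m : X \in words S m -> lp p X \in words S (p + m)%N.
Proof.
elim: p => [//|p IH] hX; rewrite /lp iterS -/(lp p X) addSn.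
by apply: wordsL (IH hX); rewrite inE eqxx.
Qed.

Lemma rp_words q X m : X \in words S m -> rp q X \in words S (m + q)%N.
Proof.
elim: q => [|q IH] hX; first by rewrite addn0.
rewrite /rp iterS -/(rp q X) addnS -(addn1 (m + q)); exact: words_mul (IH hX) J_words.
Qed.

Lemma W_eq i q : (i <= k.+1)%N -> (q < n)%N ->
  lp (k.+1 - i) (rp q B) = E i q - E i.+1 q.+1.
Proof.
move=> hi hq; apply: ent_eq => a b ha hb.
rewrite ent_lp ent_rp // entD entN !entE entB0.
case: (leqP q b) => h.
  apply: boolR; apply/idP/idP; lia.
transitivity (false%:R - false%:R : algC); first by rewrite subrr.
apply: boolR; apply/idP/idP; lia.
Qed.


Lemma entsum (I : finType) (F : I -> MM) a b :
  ent (\sum_i F i) a b = \sum_i ent (F i) a b.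
Proof.
apply: (big_ind2 (fun X y => ent X a b = y)); first exact: ent0.
  by move=> x1 x2 y1 y2 <- <-; rewrite entD.
by [].
Qed.

Ltac bash :=
  repeat (match goal with
   | |- context [(?x == ?y)%N] => let H := fresh in case: (x =P y) => H
   | |- context [(?x <= ?y)%N] => let H := fresh in case: (leqP x y) => H
   end; try (exfalso; lia));
  rewrite /= ?(mulr1n, mulr0n, mul1r, mul0r, mulr1, mulr0, subr0, sub0r, subrr, oppr0, opprK, addr0, add0r) //.

Definition Z (j : nat) : MM := B *m lp k (B *m rp j 1%:M).

Lemma Z_eq j : (j < n)%N -> Z j = - E k.+2 j.
Proof.
move=> hj; apply: ent_eq => a b ha hb.
rewrite /Z entN entE entB !ent_lp !entB !ent_rp // !ent1 !add0n !add1n.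
bash.
Qed.


Lemma Jpow_eq : lp k.+2 1%:M = E 0 k.+2.
Proof.
apply: ent_eq => a b ha hb; rewrite ent_lp ent1 entE; bash.
Qed.

Lemma E_outr i : E i k.+3 = 0.
Proof. by rewrite /E ltnn andbF. Qed.

Section Span.
Variable j0 : nat.
Hypothesis hj0 : (2 * k + 3 <= j0)%N.
Local Notation V := (Lk S j0).

Lemma W_in i c : (i <= k.+1)%N -> (c < n)%N -> (k.+1 - i + (1 + c) <= j0)%N ->
  E i c - E i.+1 c.+1 \in V.
Proof.
move=> hi hc hl; rewrite -W_eq //; apply: Lk_words hl.
by apply: lp_words; apply: rp_words B_words.
Qed.

Lemma Z_in c : (c <= k.+1)%N -> E k.+2 c \in V.
Proof.
move=> hc; rewrite -[E _ _]opprK -Z_eq; last lia.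
rewrite memvN; apply: (@Lk_words _ (1 + (k + (1 + (0 + c))))%N); last lia.
apply: (words_mul B_words); apply: lp_words; apply: (words_mul B_words).
by apply: rp_words; rewrite words0.
Qed.

Lemma Jpow_in : E 0 k.+2 \in V.
Proof.
rewrite -Jpow_eq; apply: (@Lk_words _ (k.+2 + 0)%N); last lia.
by apply: lp_words; rewrite words0.
Qed.

Lemma off_in d : forall i c, (i + d = k.+2)%N -> (c < n)%N -> c != i -> E i c \in V.
Proof.
elim: d => [|d IH] i c hid hc hci.
  rewrite addn0 in hid; subst i; apply: Z_in; move: hci => /eqP; lia.
have hi : (i <= k.+1)%N by lia.
case: (ltnP c k.+2) => hc2.
  have -> : E i c = (E i c - E i.+1 c.+1) + E i.+1 c.+1 by rewrite subrK.
  apply: memvD; first by apply: W_in => //; lia.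
  apply: (IH i.+1 c.+1); [lia | lia | apply/eqP; move/eqP: hci; lia].
have ec : c = k.+2 by lia.
subst c; case: i hid hi hci => [|i] hid hi hci; first exact: Jpow_in.
have -> : E i.+1 k.+2 = E i.+1 k.+2 - E i.+2 k.+3 by rewrite E_outr subr0.
apply: W_in => //; lia.
Qed.

Lemma diff_in i : (i < n)%N -> E 0 0 - E i i \in V.
Proof.
elim: i => [|i IH] hi; first by rewrite subrr mem0v.
have -> : E 0 0 - E i.+1 i.+1 = (E 0 0 - E i i) + (E i i - E i.+1 i.+1).
  by rewrite addrA subrK.
apply: memvD; first by apply: IH; lia.
apply: W_in; lia.
Qed.

Lemma one_eq : 1%:M = \sum_(i < n) E i i.
Proof.
apply: ent_eq => a b ha hb; rewrite ent1 entsum.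
rewrite (eq_bigr (fun i : 'I_n => ((a == b) && (i == a :> nat))%:R * 1)); last first.
  move=> i _; rewrite entE mulr1.
  suff -> : [&& a == i, b == i, (i < n)%N & (i < n)%N] = ((a == b) && (i == a :> nat)) by [].
  apply/idP/idP; have := ltn_ord i; lia.
by rewrite sum_pick // mulr1 ha andbT.
Qed.

Lemma diag_in i : (i < n)%N -> E i i \in V.
Proof.
have h00 : E 0 0 \in V.
  have hn : (n%:R : algC) != 0 by rewrite Num.Theory.pnatr_eq0.
  have -> : E 0 0 = (n%:R)^-1 *: (\sum_(i < n) (E 0 0 - E i i) + 1%:M).
    rewrite one_eq -big_split /=.
    under eq_bigr => t _ do rewrite subrK.
    by rewrite sumr_const card_ord -scaler_nat scalerA mulVf // scale1r.
  apply: memvZ; apply: memvD.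
    by apply: memv_suml => t _; apply: diff_in.
  by apply: (@Lk_words _ 0%N); rewrite ?words0.
move=> hi; have -> : E i i = E 0 0 - (E 0 0 - E i i) by rewrite opprB addrC subrK.
by apply: memvB => //; apply: diff_in.
Qed.

Lemma E_in a b : (a < n)%N -> (b < n)%N -> E a b \in V.
Proof.
move=> ha hb; case: (eqVneq b a) => [->|hba]; first exact: diag_in.
by apply: (off_in (d := (k.+2 - a)%N)) => //; lia.
Qed.

Lemma all_in A : A \in V.
Proof.
rewrite (matrix_sum_delta A); apply: memv_suml => i _; apply: memv_suml => j _.
apply: memvZ; have := E_in (ltn_ord i) (ltn_ord j).
by rewrite /E !ltn_ord /= !inord_val.
Qed.

End Span.


Lemma sum_pick1 (v : nat) (F : 'I_n -> algC) : (v < n)%N ->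
  \sum_(c < n) (c == v :> nat)%:R * F c = F (inord v).
Proof. move=> hv; have := sum_pick true F hv; by rewrite mul1r. Qed.

Lemma wordsS_inv W m : W \in words S m.+1 ->
  exists2 W', W' \in words S m & W = J *m W' \/ W = B *m W'.
Proof.
rewrite wordsSE => /allpairsP [[A W'] [/= hA hW ->]]; exists W' => //.
by move: hA; rewrite !inE => /orP [] /eqP ->; [left|right].
Qed.

Lemma IW m W a b : W \in words S m -> ent W a b != 0 ->
  exists t, (b + t * k.+2 = a + m)%N.
Proof.
elim: m W a b => [|m IH] W a b.
  rewrite /= mem_seq1 => /eqP ->; rewrite ent1 => h.
  have /eqP -> : a == b by apply: contraR h => /negbTE ->.
  by exists 0%N; rewrite mul0n !addn0.
move=> /wordsS_inv [W' hW' [->|->]].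
  by rewrite entJ => /(IH _ _ _ hW') [t ht]; exists t; lia.
rewrite entB; case: (a =P k.+1) => [ea|na]; case: (a =P k.+2) => [eb|nb].
- exfalso; lia.
- rewrite mul1r mul0r subr0 => /(IH _ _ _ hW') [t ht]; exists t.+1; rewrite mulSn; lia.
- rewrite mul1r mul0r sub0r oppr_eq0 => /(IH _ _ _ hW') [t ht]; exists t.+1; rewrite mulSn; lia.
- by rewrite !mul0r subr0 eqxx.
Qed.

Lemma I2 m W a : W \in words S m -> (a + m < k.+2)%N ->
  ent W a (a + m)%N = ent W a.+1 (a + m).+1.
Proof.
elim: m W a => [|m IH] W a.
  rewrite /= mem_seq1 => /eqP -> h; rewrite !ent1 !addn0 !eqxx /=.
  have h1 : (a < n)%N by lia.
  have h2 : (a.+1 < n)%N by lia.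
  by rewrite h1 h2.
move=> /wordsS_inv [W' hW' [->|->]] h.
  by rewrite !entJ -addSnnS IH // addSnnS.
rewrite !entB.
have -> : (a == k.+1)%N = false by apply/eqP; lia.
have -> : (a == k.+2)%N = false by apply/eqP; lia.
have -> : (a.+1 == k.+2)%N = false by apply/eqP; lia.
rewrite !mul0r subrr subr0.
case: (a.+1 =P k.+1) => [e|]; last by rewrite mul0r.
rewrite mul1r; apply/esym/eqP; apply: contraT => /(IW hW') [t] ht.
lia.
Qed.

Lemma I3 m W : W \in words S m -> (m <= k.+2)%N ->
  \sum_(b < n) ent W (b + (k.+2 - m))%N b = 0.
Proof.
elim: m W => [|m IH] W.
  rewrite /= mem_seq1 => /eqP -> _; apply: big1 => b _; rewrite ent1.
  by case: eqP => //; lia.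
move=> /wordsS_inv [W' hW' [->|->]] h.
  rewrite -[RHS](IH W' hW' (ltnW h)); apply: eq_bigr => b _; rewrite entJ.
  congr ent; lia.
under eq_bigr => b _ do rewrite entB.
rewrite sumrB.
rewrite (eq_bigr (fun b : 'I_n => (b == m :> nat)%:R * ent W' 0 b)); last first.
  by move=> b _; congr (_%:R * _); apply/eqP; case: eqP => //; case: eqP => //; lia.
rewrite sum_pick1; last lia.
rewrite (eq_bigr (fun b : 'I_n => (b == m.+1 :> nat)%:R * ent W' 1 b)); last first.
  by move=> b _; congr (_%:R * _); apply/eqP; case: eqP => //; case: eqP => //; lia.
rewrite sum_pick1; last lia.
rewrite !inordK; try lia.
have e := @I2 m W' 0 hW'; rewrite !add0n in e.
by rewrite e ?subrr.
Qed.


Definition fF (M : MM) : algC := \sum_(b < n) ent M b.+1 b.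
Definition gF (M : MM) : algC := \sum_(b < n) ent M b b.

Lemma fF_D x y : fF (x + y) = fF x + fF y.
Proof. by rewrite /fF -big_split; apply: eq_bigr => b _; rewrite entD. Qed.
Lemma fF_Z c x : fF (c *: x) = c * fF x.
Proof. by rewrite /fF mulr_sumr; apply: eq_bigr => b _; rewrite entZ. Qed.
Lemma fF_0 : fF 0 = 0.
Proof. by rewrite /fF big1 // => b _; rewrite ent0. Qed.
Lemma gF_D x y : gF (x + y) = gF x + gF y.
Proof. by rewrite /gF -big_split; apply: eq_bigr => b _; rewrite entD. Qed.
Lemma gF_Z c x : gF (c *: x) = c * gF x.
Proof. by rewrite /gF mulr_sumr; apply: eq_bigr => b _; rewrite entZ. Qed.
Lemma gF_0 : gF 0 = 0.
Proof. by rewrite /gF big1 // => b _; rewrite ent0. Qed.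

Lemma fF_words m W : W \in words S m -> (m <= 2 * k + 2)%N -> fF W = 0.
Proof.
move=> hW hm; case: (m =P k.+1) => [e|ne].
  subst m; rewrite /fF -[RHS](I3 hW); last lia.
  by apply: eq_bigr => b _; congr ent; lia.
rewrite /fF; apply: big1 => b _; apply/eqP; apply: contraT => /(IW hW) [t ht].
case: t ht => [|[|t]] ht; first lia; first lia.
rewrite !mulSn in ht; lia.
Qed.

Lemma gF_words m W : W \in words S m -> (1 <= m <= 2 * k + 3)%N -> gF W = 0.
Proof.
move=> hW hm; case: (m =P k.+2) => [e|ne].
  subst m; rewrite /gF -[RHS](I3 hW); last lia.
  by apply: eq_bigr => b _; congr ent; lia.
rewrite /gF; apply: big1 => b _; apply/eqP; apply: contraT => /(IW hW) [t ht].
case: t ht => [|[|t]] ht; first lia; first lia.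
rewrite !mulSn in ht; lia.
Qed.

Lemma fF_E10 : fF (E 1 0) = 1.
Proof.
rewrite /fF (eq_bigr (fun b : 'I_n => (b == 0 :> nat)%:R * 1)); last first.
  move=> b _; rewrite entE mulr1.
  suff -> : [&& b.+1 == 1, (b : nat) == 0, (1 < n)%N & (0 < n)%N]%N = (b == 0 :> nat) by [].
  by apply/idP/idP; lia.
by rewrite sum_pick1.
Qed.

Lemma gF_E00 : gF (E 0 0) = 1.
Proof.
rewrite /gF (eq_bigr (fun b : 'I_n => (b == 0 :> nat)%:R * 1)); last first.
  move=> b _; rewrite entE mulr1.
  suff -> : [&& (b : nat) == 0, (b : nat) == 0, (0 < n)%N & (0 < n)%N]%N = (b == 0 :> nat) by [].
  by apply/idP/idP; lia.
by rewrite sum_pick1.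
Qed.

Lemma mul_Lk A j X : A \in S -> X \in Lk S j -> A *m X \in Lk S j.+1.
Proof.
move=> hA hX; apply: (span_mul _ hX) => x /Lk_inv [m hm hx].
by apply: (@Lk_words _ m.+1); [exact: wordsL | lia].
Qed.

Lemma mul_L0 A j X : A \in S -> X \in L0k S j -> A *m X \in L0k S j.+1.
Proof.
move=> hA hX; apply: (span_mul _ hX) => x /L0k_inv [m hm hx].
by apply: (@L0k_words _ m.+1); [exact: wordsL | lia].
Qed.

Lemma mul_Lk_L0 A j X : A \in S -> X \in Lk S j -> A *m X \in L0k S j.+1.
Proof.
move=> hA hX; apply: (span_mul _ hX) => x /Lk_inv [m hm hx].
by apply: (@L0k_words _ m.+1); [exact: wordsL | lia].
Qed.

Lemma JS : J \in S. Proof. by rewrite inE eqxx. Qed.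
Lemma BS : B \in S. Proof. by rewrite !inE eqxx orbT. Qed.

Lemma Lk_stable j : Lk S j = Lk S j.+1 -> forall t W, W \in words S t -> W \in Lk S j.
Proof.
move=> e; elim=> [|t IH] W hW; first by apply: Lk_words hW _.
case: (leqP t.+1 j) => h; first exact: Lk_words hW h.
move: hW => /wordsS_inv [W' hW' [->|->]]; rewrite e; apply: mul_Lk;
  by [exact: JS | exact: BS | exact: IH].
Qed.

Lemma L0k_stable j : L0k S j = L0k S j.+1 ->
  forall t W, (1 <= t)%N -> W \in words S t -> W \in L0k S j.
Proof.
move=> e; elim=> [//|t IH] W _ hW.
case: (leqP t.+1 j) => h; first by apply: L0k_words hW _; lia.
case: t IH hW h => [|t] IH hW h.
  by rewrite e; apply: L0k_words hW _; lia.
move: hW => /wordsS_inv [W' hW' [->|->]]; rewrite e; apply: mul_L0;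
  by [exact: JS | exact: BS | exact: IH].
Qed.

Lemma Lk_strict j : (j < 2 * k + 3)%N -> Lk S j <> Lk S j.+1.
Proof.
move=> hj e.
have sub : (Lk S (2 * k + 3) <= Lk S j)%VS.
  by apply/span_subvP => x /Lk_inv [m _ hx]; exact: Lk_stable e _ _ hx.
have h10 : E 1 0 \in Lk S j by apply: (subvP sub); apply: all_in.
have := span_vanish fF_D fF_Z fF_0 _ h10.
rewrite fF_E10 => h.
have h0 : (1 : algC) = 0.
  by apply: h => x /Lk_inv [m hm hx]; apply: fF_words hx _; lia.
by move/eqP: h0; rewrite oner_eq0.
Qed.

Lemma JE a b : (a < k.+2)%N -> J *m E a.+1 b = E a b.
Proof. move=> ha; apply: ent_eq => x y hx hy; rewrite entJ !entE; bash. Qed.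

Lemma BE b : - (B *m E 1 b) = E k.+2 b.
Proof. apply: ent_eq => x y hx hy; rewrite entN entB !entE; bash. Qed.

Lemma L0_full j0 : (2 * k + 4 <= j0)%N -> forall A, A \in L0k S j0.
Proof.
case: j0 => [|j0] hj0; first lia.
have hE a b : (a < n)%N -> (b < n)%N -> E a b \in L0k S j0.+1.
  move=> ha hb; case: (ltnP a k.+2) => h.
    by rewrite -JE //; apply: mul_Lk_L0 JS _; apply: all_in; lia.
  have -> : a = k.+2 by lia.
  by rewrite -BE memvN; apply: mul_Lk_L0 BS _; apply: all_in; lia.
move=> A; rewrite (matrix_sum_delta A); apply: memv_suml => i _; apply: memv_suml => j _.
apply: memvZ; have := hE _ _ (ltn_ord i) (ltn_ord j).
by rewrite /E !ltn_ord /= !inord_val.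
Qed.

Lemma L0k_strict j : (j < 2 * k + 4)%N -> L0k S j <> L0k S j.+1.
Proof.
move=> hj e.
have sub : (L0k S (2 * k + 4) <= L0k S j)%VS.
  by apply/span_subvP => x /L0k_inv [m hm hx]; apply: L0k_stable e _ _ _ hx; lia.
have h00 : E 0 0 \in L0k S j by apply: (subvP sub); apply: L0_full.
have := span_vanish gF_D gF_Z gF_0 _ h00.
rewrite gF_E00 => h.
have h0 : (1 : algC) = 0.
  by apply: h => x /L0k_inv [m hm hx]; apply: gF_words hx _; lia.
by move/eqP: h0; rewrite oner_eq0.
Qed.

End Main.

Theorem mainTheorem6 (n : nat) (hn : (3 <= n)%N) :
  (forall A : 'M[algC]_n, inL [:: Jn algC n; Bn algC n] A) /\
  is_l [:: Jn algC n; Bn algC n] (2 * n - 3)%N /\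
  is_l0 [:: Jn algC n; Bn algC n] (2 * n - 2)%N.
Proof.
case: n hn => [|[|[|k]]] // _.
change [:: Jn algC k.+3; Bn algC k.+3] with (S k).
have -> : (2 * k.+3 - 3 = 2 * k + 3)%N by lia.
have -> : (2 * k.+3 - 2 = 2 * k + 4)%N by lia.
split; first by move=> A; exists (2 * k + 3)%N; apply: all_in.
split; split.
- by apply/vspaceP => A; rewrite !all_in //; lia.
- by move=> j hj; apply: Lk_strict.
- by apply/vspaceP => A; rewrite !L0_full //; lia.
- by move=> j hj; apply: L0k_strict.
Qed.
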